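(* Let $D=(V,A)$ be a directed graph and let $R_D$ be an inclusion-wise minimal bad set of $D$. Let $D'=(V',A')$ where $V'=V\cup\{r_1,r_2\}$ with $r_1,r_2$ new vertices and $A'=A\cup\{(r_1,r_2)\}\cup\{(v,r_1),(r_2,v)\mid v\in R_D\}$. Then $n(D')=n(D)+2$, $f(D')=f(D)+1$, and $\{r_1,r_2\}$ is an inclusion-wise minimal bad set of $D'$.
   Context: Directed graphs are oriented graphs: finite, no loops, no multiple arcs and no pair of antiparallel arcs. $n(H)$ is the number of vertices and $f(H)$ is the minimum size of a set $F\subseteq V(H)$ such that $H-F$ contains no directed cycle. A set $R\subseteq V(H)$ is bad if it is not contained in any minimum feedback vertex set of $H$; it is an inclusion-wise minimal bad set if no proper subset of it is bad. *)

(* Defs.v *)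
From mathcomp Require Import all_boot.
Set Implicit Arguments. Unset Strict Implicit. Unset Printing Implicit Defensive.

(* A directed graph on a finite vertex type T is an arc relation e : rel T
   (e u v = there is an arc (u,v)).  Oriented: no loops, no antiparallel pairs. *)
Definition oriented (T : finType) (e : rel T) : Prop :=
  (forall x, ~~ e x x) /\ (forall x y, e x y -> ~~ e y x).

Definition nverts (T : finType) (e : rel T) : nat := #|T|.

Definition dicycle (T : finType) (e : rel T) (S : {set T}) (c : seq T) : bool :=
  [&& c != [::], uniq c, all (fun x => x \in S) c & cycle e c].

Definition is_fvs (T : finType) (e : rel T) (F : {set T}) : Prop :=
  forall c : seq T, ~~ dicycle e (~: F) c.

Definition min_fvs (T : finType) (e : rel T) (F : {set T}) : Prop :=
  is_fvs e F /\ forall F' : {set T}, is_fvs e F' -> #|F| <= #|F'|.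

Definition is_fvn (T : finType) (e : rel T) (k : nat) : Prop :=
  (exists F : {set T}, is_fvs e F /\ #|F| = k) /\
  (forall F : {set T}, is_fvs e F -> k <= #|F|).

Definition bad (T : finType) (e : rel T) (R : {set T}) : Prop :=
  forall F : {set T}, min_fvs e F -> ~ (R \subset F).

Definition minimal_bad (T : finType) (e : rel T) (R : {set T}) : Prop :=
  bad e R /\ forall R' : {set T}, R' \proper R -> ~ bad e R'.

(* The extended digraph D': vertices option (option T), where
   r1 := None, r2 := Some None, and Some (Some v) is the old vertex v.
   Arcs: old arcs, (r1,r2), and (v,r1), (r2,v) for v in R. *)
Definition r1 {T : Type} : option (option T) := None.
Definition r2 {T : Type} : option (option T) := Some None.

Definition ext_rel (T : finType) (e : rel T) (R : {set T}) : rel (option (option T)) :=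
  fun x y =>
    match x, y with
    | Some (Some u), Some (Some v) => e u v
    | None, Some None => true
    | Some (Some v), None => v \in R
    | Some None, Some (Some v) => v \in R
    | _, _ => false
    end.

(* Main.v *)
Require Import Defs.
From mathcomp Require Import all_boot.
From Stdlib Require Import Classical Lia.
From mathcomp Require Import zify.
Set Implicit Arguments. Unset Strict Implicit.

Section Aux.
Variables (T : finType) (e : rel T) (R : {set T}).
Local Notation E := (ext_rel e R).
Definition ss (v : T) : option (option T) := Some (Some v).

Lemma ss_inj : injective ss.
Proof. by move=> x y [->]. Qed.

Lemma dicycle_map (S : {set option (option T)}) c0 :
  dicycle E S (map ss c0) = dicycle e (ss @^-1: S) c0.
Proof.
rewrite /dicycle map_inj_uniq; last exact: ss_inj.
rewrite all_map cycle_map.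
have -> : (map ss c0 != [::]) = (c0 != [::]) by case: c0.
congr [&& _, _, _ & _].
by apply: eq_all => x; rewrite /= inE.
Qed.

Lemma old_seq (c : seq (option (option T))) :
  r1 \notin c -> r2 \notin c -> exists c0, c = map ss c0.
Proof.
elim: c => [|x c IH]; first by exists [::].
rewrite !in_cons !negb_or => /andP[h1 n1] /andP[h2 n2].
have [c0 ->] := IH n1 n2.
case: x h1 h2 => [[v|]|] //= _ _; by exists (v :: c0).
Qed.

Lemma fvs_pre (F' : {set option (option T)}) :
  is_fvs E F' -> is_fvs e (ss @^-1: F').
Proof.
move=> H c; apply/negP => Hc.
have := H (map ss c); rewrite dicycle_map preimsetC Hc //.
Qed.

Lemma fvs_lift (G : {set T}) (F' : {set option (option T)}) :
  is_fvs e G -> (r1 \in F' \/ r2 \in F') -> ss @: G \subset F' -> is_fvs E F'.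
Proof.
move=> HG Hr Hsub c; apply/negP => Hc.
have Hc' := Hc; move: Hc' => /and4P[_ _ Hall Hcyc].
have notin : forall x, x \in c -> x \notin F'.
  by move=> x xc; have := allP Hall x xc; rewrite inE.
have h12 : r1 \in c -> r2 \in c.
  move=> h; have := next_cycle Hcyc h; have := mem_next c r1; rewrite h.
  by case: (next c r1) => [[v|]|] //= ->.
have h21 : r2 \in c -> r1 \in c.
  move=> h; have := prev_cycle Hcyc h; have := mem_prev c r2; rewrite h.
  by case: (prev c r2) => [[v|]|] //= ->.
have n1 : r1 \notin c.
  apply/negP => h; case: Hr => Hr.
    by have := notin _ h; rewrite Hr.
  by have := notin _ (h12 h); rewrite Hr.
have n2 : r2 \notin c by apply/negP => /h21; rewrite (negbTE n1).
have [c0 Ec] := old_seq n1 n2.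
move: Hc; rewrite Ec dicycle_map => Hc0.
have := HG c0; apply/negP/negPn; move: Hc0 => /and4P[a b d f].
apply/and4P; split => //; apply/allP => x xc; have := allP d x xc.
rewrite !inE => Hx; apply/negP => xG.
move: Hx => /negP; apply; apply: (subsetP Hsub); by apply: imset_f.
Qed.

Lemma card_pre (F' : {set option (option T)}) :
  #|ss @^-1: F'| + (r1 \in F') + (r2 \in F') = #|F'|.
Proof.
set P := ss @^-1: F'; set I := ss @: P.
have cI : #|I| = #|P| by rewrite card_imset //; exact: ss_inj.
have n1 : r1 \notin I by apply/imsetP => -[x _].
have n2 : r2 \notin I by apply/imsetP => -[x _].
have mI : forall v, (ss v \in I) = (ss v \in F').
  by move=> v; rewrite /I (mem_imset _ _ ss_inj) inE.
case h1: (r1 \in F'); case h2: (r2 \in F').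
- have -> : F' = r1 |: (r2 |: I).
    by apply/setP => -[[v|]|]; rewrite !inE ?mI ?h1 ?h2 ?orbT.
  rewrite cardsU1 cardsU1 !inE n2 negb_or n1 /= cI; lia.
- have -> : F' = r1 |: I.
    apply/setP => -[[v|]|]; rewrite !inE ?mI ?h1 ?h2 ?orbT //.
    by rewrite (negbTE n2).
  rewrite cardsU1 n1 cI; lia.
- have -> : F' = r2 |: I.
    apply/setP => -[[v|]|]; rewrite !inE ?mI ?h1 ?h2 ?orbT //.
    by rewrite (negbTE n1).
  rewrite cardsU1 n2 cI; lia.
- have -> : F' = I.
    have e1 : (@None (option T) \in I) = false by apply/imsetP => -[].
    have e2 : (Some (@None T) \in I) = false by apply/imsetP => -[].
    apply/setP => -[[v|]|]; first by rewrite mI.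
    by rewrite e2 -h2.
    by rewrite e1 -h1.
  rewrite cI; lia.
Qed.

Lemma lower (G : {set T}) (F' : {set option (option T)}) :
  min_fvs e G -> bad e R -> is_fvs E F' -> #|G| < #|F'|.
Proof.
move=> [HG Gmin] Hbad HF.
have HP := fvs_pre HF.
have le1 := Gmin _ HP.
have cp := card_pre F'.
case h1: (r1 \in F') cp => cp; first lia.
case h2: (r2 \in F') cp => cp; first lia.
rewrite !addn0 in cp.
rewrite ltnNge; apply/negP => le2.
have Pmin : min_fvs e (ss @^-1: F').
  split => // F HF'; have := Gmin _ HF'; lia.
have := Hbad _ Pmin => /negP /subsetPn [v vR vP].
have := HF [:: r1; r2; ss v]; apply/negP/negPn.
rewrite /dicycle /= !inE h1 h2 /= vR andbT.
move: vP; rewrite inE => ->.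
by rewrite andbT.
Qed.

Lemma upper (G : {set T}) (r : option (option T)) :
  r = r1 \/ r = r2 -> is_fvs e G ->
  is_fvs E (r |: ss @: G) /\ #|r |: ss @: G| = #|G|.+1.
Proof.
move=> Hr HG; split.
  apply: fvs_lift HG _ _; last by apply/subsetP => x xi; rewrite inE xi orbT.
  by case: Hr => ->; [left|right]; rewrite !inE eqxx.
rewrite cardsU1 card_imset; last exact: ss_inj.
have -> : r \notin ss @: G by case: Hr => -> ; apply/imsetP => -[].
by [].
Qed.

End Aux.

Lemma exists_min (T : finType) (e : rel T) : exists G, min_fvs e G.
Proof.
have HT : is_fvs e [set: T].
  move=> c; apply/negP => /and4P[c0 _ ha _].
  case: c c0 ha => [|x c] //= _; by rewrite !inE.
suff H : forall n (F : {set T}), #|F| <= n -> is_fvs e F -> exists G, min_fvs e G.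
  exact: (H _ _ (leqnn _) HT).
elim=> [|n IH] F hF HF.
  exists F; split => // F' _; move: hF; rewrite leqn0 => /eqP ->; done.
destruct (classic (exists F', is_fvs e F' /\ #|F'| < #|F|)) as [[F' [H1 H2]]|Hn].
  apply: (IH F') => //; lia.
exists F; split => // F' HF'; rewrite leqNgt; apply/negP => lt.
by apply: Hn; exists F'.
Qed.

Theorem mainTheorem15 (T : finType) (e : rel T) (R : {set T}) :
  oriented e -> minimal_bad e R ->
  nverts (ext_rel e R) = nverts e + 2 /\
  (forall k : nat, is_fvn e k -> is_fvn (ext_rel e R) k.+1) /\
  minimal_bad (ext_rel e R) [set r1; r2].
Proof.
move=> _ [Hbad _].
have [G HG] := exists_min e.
have Hlow := fun F' => lower HG Hbad (F' := F').
have [U1 C1] := upper R (or_introl erefl) HG.1.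
have [U2 C2] := upper R (or_intror erefl) HG.1.
split; first by rewrite /nverts !card_option addn2.
split.
  move=> k [[F [HF <-]] Hk].
  have e1 := Hk _ HG.1; have e2 := HG.2 _ HF.
  have -> : #|F| = #|G| by lia.
  split; first by exists (r1 |: @ss T @: G).
  by move=> F' /Hlow.
split.
  move=> F' [HF' Fmin] Hsub.
  have := Fmin _ U1; rewrite C1 => le1.
  have := card_pre F'; have := fvs_pre HF' => /(HG.2) le2.
  have := subsetP Hsub r1; have := subsetP Hsub r2; rewrite !inE !eqxx orbT /=.
  move=> -> // -> //. rewrite /nat_of_bool => H.
  have : #|G| + 2 <= #|G|.+1 by apply: leq_trans le1; rewrite -H -addnA leq_add2r.
  by rewrite addn2 ltnn.
move=> R' /properP [Hs [x xin xn]].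
have minr : forall r, (r = r1 \/ r = r2) -> min_fvs (ext_rel e R) (r |: @ss T @: G).
  move=> r Hr; have [U C] := upper R Hr HG.1; split => // F2 /Hlow; by rewrite C.
have Hx : x = r1 \/ x = r2 by move: xin; rewrite !inE => /orP[] /eqP; auto.
case: Hx => Ex; subst x.
- move=> /(_ _ (minr r2 (or_intror erefl))); apply.
  apply/subsetP => y yR; have := subsetP Hs y yR; rewrite !inE => /orP[/eqP Ey|->//].
  by subst y; rewrite yR in xn.
- move=> /(_ _ (minr r1 (or_introl erefl))); apply.
  apply/subsetP => y yR; have := subsetP Hs y yR; rewrite !inE => /orP[->//|/eqP Ey].
  by subst y; rewrite yR in xn.
Qed.
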